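(* Let $S$ be an infinite supernatural number and let $\lambda$ be a non-archimedean length function on $\widetilde{\mathbb Z_S}$. Then there exist a scale $s=(s_m)_{m\ge1}$ for $S$ and an increasing sequence $l=(l_m)_{m\ge1}$ of numbers in $(1,\infty)$ with $\lim_{m\to\infty}l_m=\infty$ such that $\lambda=\lambda_{s,l}$.
   Context: $\widetilde{\mathbb Z_S}=\{z\in\mathbb C: z^s=1\text{ for some natural number } s\mid S\}$. A non-archimedean length function on $\widetilde{\mathbb Z_S}$ is a function $\lambda:\widetilde{\mathbb Z_S}\to[1,\infty)$ such that (i) $\lambda(z)=1$ iff $z=1$; (ii) $\lambda(z_1z_2)\le\max\{\lambda(z_1),\lambda(z_2)\}$; (iii) for every $r\ge1$ the set $\{z:\lambda(z)\le r\}$ is finite. A scale for $S$ is a sequence of positive integers $(s_m)_{m\ge1}$ with $s_m\mid s_{m+1}$, $s_m<s_{m+1}$, $S=\mathrm{lcm}(s_m)$; set $s_0:=1$, $l_0:=1$. Every $z\ne1$ in $\widetilde{\mathbb Z_S}$ is uniquely $z=e^{2\pi ij/s_m}$ with $m\ge1$, $0<j<s_m$, $s_m/s_{m-1}\nmid j$, and $\lambda_{s,l}$ is defined by $\lambda_{s,l}(1)=1$ and $\lambda_{s,l}(e^{2\pi ij/s_m})=l_m$ for such $z$. *)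

(* Defs.v *)
From mathcomp Require Import all_boot all_order all_algebra all_field.
From mathcomp Require Import reals.
Set Implicit Arguments. Unset Strict Implicit. Unset Printing Implicit Defensive.
Import Order.TTheory GRing.Theory Num.Theory.
Local Open Scope ring_scope.

(* A supernatural number S = prod_p p^(e_p), e_p in N u {oo}, represented by its
   exponent function on primes: S p = Some e_p, or None for e_p = oo.
   (Values at non-primes are irrelevant.) *)
Definition supernat := nat -> option nat.

Definition sdvd (n : nat) (S : supernat) : Prop :=
  forall p, prime p -> match S p with Some k => is_true (logn p n <= k)%N | None => True end.

Definition snat_finite (S : supernat) : Prop :=
  exists n : nat, (0 < n)%N /\ forall p, prime p -> S p = Some (logn p n).

Definition snat_infinite (S : supernat) : Prop := ~ snat_finite S.

Definition inZS (S : supernat) (z : algC) : Prop :=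
  exists s : nat, (0 < s)%N /\ sdvd s S /\ z ^+ s = 1.

(* non-archimedean length function on ~Z_S (lambda given as a function on C,
   only its values on ~Z_S matter) *)
Definition na_length (R : realType) (S : supernat) (lam : algC -> R) : Prop :=
  [/\ (forall z, inZS S z -> 1 <= lam z),
      (forall z, inZS S z -> (lam z = 1 <-> z = 1)),
      (forall z1 z2, inZS S z1 -> inZS S z2 ->
          lam (z1 * z2) <= Num.max (lam z1) (lam z2)) &
      (forall r : R, 1 <= r -> exists F : seq algC,
          forall z, inZS S z -> lam z <= r -> z \in F)].

(* S is the lcm of the natural numbers s_m, m >= 1: for each prime p,
   e_p = sup_m logn p s_m (possibly infinite) *)
Definition is_lcm_seq (S : supernat) (s : nat -> nat) : Prop :=
  forall p, prime p ->
    match S p with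
    | Some k => (forall m, (1 <= m)%N -> (logn p (s m) <= k)%N) /\
                exists m, (1 <= m)%N /\ logn p (s m) = k
    | None => forall k, exists m, (1 <= m)%N /\ (k < logn p (s m))%N
    end.

Definition is_scale (S : supernat) (s : nat -> nat) : Prop :=
  [/\ (forall m, (1 <= m)%N -> (0 < s m)%N),
      (forall m, (1 <= m)%N -> (s m %| s m.+1)%N),
      (forall m, (1 <= m)%N -> (s m < s m.+1)%N) &
      is_lcm_seq S s].

Definition sc (s : nat -> nat) (m : nat) : nat := if m == 0%N then 1%N else s m.

(* e^{2 pi i / n} in algC: n.-root (-1) is the n-th root of -1 of minimal
   nonnegative argument, i.e. e^{i pi / n}; its square is e^{2 pi i / n}. *)
Definition expi (n j : nat) : algC := ((n.-root (-1)) ^+ 2) ^+ j.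

(* lam = lambda_{s,l} on ~Z_S: lambda_{s,l}(1) = 1 and
   lambda_{s,l}(e^{2 pi i j / s_m}) = l_m for m >= 1, 0 < j < s_m,
   s_m / s_{m-1} not dividing j (every z <> 1 in ~Z_S has exactly one such
   representation). *)
Definition eq_lambda_sl (R : realType) (lam : algC -> R)
    (s : nat -> nat) (l : nat -> R) : Prop :=
  lam 1 = 1 /\
  forall m j, (1 <= m)%N -> (0 < j)%N -> (j < s m)%N ->
    ~~ (s m %/ sc s m.-1 %| j)%N ->
    lam (expi (s m) j) = l m.

(* Main.v *)
Require Import Defs.
From mathcomp Require Import all_boot all_order all_algebra all_field.
From mathcomp Require Import boolp reals.
From mathcomp Require Import ring lra zify.
From Stdlib Require Import Lia ClassicalEpsilon.
Import Order.TTheory GRing.Theory Num.Theory.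
Local Open Scope ring_scope.
Lemma key_real (F : realFieldType) (a b c s : F) :
  a^+2 + b^+2 = 1 -> c^+2 + s^+2 = 1 -> c < 1 ->
  a * (c^+2 - s^+2) - b * (2 * c * s) <= a ->
  a * (c^+2 - s^+2) + b * (2 * c * s) <= a ->
  a <= c -> a = c /\ b^+2 = s^+2.
Proof.
move=> hab hcs hc1 h1 h2 hac.
have ec : c^+2 = 1 - s^+2 by rewrite -hcs; ring.
have eb : b^+2 = 1 - a^+2 by rewrite -hab; ring.
have e1 : a * (c^+2 - s^+2) = a - 2 * (a * s^+2) by rewrite ec; ring.
rewrite e1 in h1 h2.
have hs : 0 < s^+2 \/ s = 0.
  case: (ltrgt0P s) => [h|h|->]; [left; exact: exprn_gt0|left; rewrite -sqrrN; apply: exprn_gt0; rewrite oppr_gt0 //|by right].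
case: hs => [hs|s0].
- have has : 0 <= a * s^+2 by lra.
  have ha : 0 <= a.
    rewrite leNgt; apply/negP => ha. nra.
  have hbc : (b*c*s)^+2 <= (a*s^+2)^+2.
    have : 0 <= (a * s^+2 - b*c*s) * (a * s^+2 + b*c*s) by apply: mulr_ge0; lra.
    move=> h; rewrite -subr_ge0; apply: le_trans h _; rewrite le_eqVlt; apply/orP; left; apply/eqP; ring.
  have hbc2 : (b*c)^+2 <= (a*s)^+2.
    have e3 : (b*c*s)^+2 = (b*c)^+2 * s^+2 by ring.
    have e4 : (a*s^+2)^+2 = (a*s)^+2 * s^+2 by ring.
    rewrite e3 e4 in hbc. by rewrite -(ler_pM2r hs).
  have ha2 : c^+2 <= a^+2.
    have : (b*c)^+2 = c^+2 - a^+2 * c^+2 by rewrite exprMn eb; ring.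
    have es : s^+2 = 1 - c^+2 by rewrite -hcs; ring.
    have : (a*s)^+2 = a^+2 - a^+2 * c^+2 by rewrite exprMn es; ring.
    lra.
  have e : a = c by nra.
  split => //; rewrite eb e -hcs; ring.
- subst s. have c1 : c = -1 by nra.
  subst c. have ea : a = -1 by nra.
  split; first by []. rewrite eb ea; ring.
Qed.

Lemma key_C (a b c s : algC) : a \is Num.real -> b \is Num.real -> c \is Num.real -> s \is Num.real ->
  a^+2 + b^+2 = 1 -> c^+2 + s^+2 = 1 -> c < 1 ->
  a * (c^+2 - s^+2) - b * (2 * c * s) <= a ->
  a * (c^+2 - s^+2) + b * (2 * c * s) <= a ->
  a <= c -> a = c /\ b^+2 = s^+2.
Proof.
move=> ra rb rc rs.
pose A := in_algR ra. pose B := in_algR rb. pose C := in_algR rc. pose S := in_algR rs.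
have -> : a = algRval A by []. have -> : b = algRval B by [].
have -> : c = algRval C by []. have -> : s = algRval S by [].
have E2 : 2 = algRval 2 by rewrite rmorph_nat.
have E1 : 1 = algRval 1 by rewrite rmorph1.
rewrite E1 E2 -!rmorphXn -!rmorphM -!rmorphB -!rmorphM -!rmorphD -!rmorphB.
move=> /val_inj h1 /val_inj h2 h3 h4 h5 h6.
have [e1 e2] := @key_real algR _ _ _ _ h1 h2 h3 h4 h5 h6.
by rewrite e1 e2.
Qed.
Lemma norm_one {y : algC} {k} : (0 < k)%N -> y ^+ k = 1 \/ y ^+ k = -1 -> `|y| = 1.
Proof.
move=> k0 h; apply/eqP; rewrite -(pexpr_eq1 k0) ?normr_ge0 // -normrX.
by case: h => ->; rewrite ?normrN normr1.
Qed.

Lemma ReIm1 {y : algC} : `|y| = 1 -> 'Re y ^+ 2 + 'Im y ^+ 2 = 1.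
Proof. by move=> h; rewrite -normC2_Re_Im h expr1n. Qed.

Lemma exists_max (f : nat -> algC) d : (0 < d)%N -> (forall j, f j \is Num.real) ->
  exists j0, (j0 < d)%N /\ forall j, (j < d)%N -> f j <= f j0.
Proof.
move=> d0 fr; elim: d d0 => [//|d IH _]; case: d IH => [_|d IH].
  by exists 0%N; split => // j; rewrite ltnS leqn0 => /eqP ->.
have [j0 [lt0 hj0]] := IH isT.
have /orP[le|le] := real_leVge (fr j0) (fr d.+1).
  exists d.+1; split => // j; rewrite ltnS leq_eqVlt => /orP[/eqP->//|/hj0].
  by move=> h; apply: le_trans h le.
exists j0; split; first by apply: ltn_trans lt0 _.
by move=> j; rewrite ltnS leq_eqVlt => /orP[/eqP->//|/hj0].
Qed.

Lemma prim_expi n : (0 < n)%N -> n.-primitive_root (expi n 1).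
Proof.
move=> n0; rewrite /expi expr1.
set r := n.-root (-1); set x := r ^+ 2.
have rn : r ^+ n = -1 by rewrite /r rootCK.
have xn : x ^+ n = 1 by rewrite /x -exprM mulnC exprM rn sqrrN expr1n.
have [d pd dn] := prim_order_exists n0 xn.
have d0 := prim_order_gt0 pd.
have xd : x ^+ d = 1 := prim_expr_order pd.
case: (eqVneq d n) => [<- //|dnn].
exfalso.
have dltn : (d < n)%N by rewrite ltn_neqAle dnn dvdn_leq.
have n20 : (0 < 2 * n)%N by rewrite muln_gt0.
have [z pz] := C_prim_root_exists n20.
have zn : z ^+ n = -1.
  have : (z ^+ n) ^+ 2 == 1 by rewrite -exprM mulnC prim_expr_order.
  rewrite sqrf_eq1 => /orP[|/eqP//].
  rewrite -(prim_order_dvd pz) => /dvdn_leq => /(_ n0); lia.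
have nr : `|r| = 1 := norm_one n0 (or_intror rn).
have nx : `|x| = 1 by rewrite normrX nr expr1n.
pose f j := 'Re (z * x ^+ j).
have [j0 [j0d hj0]] := exists_max f d d0 (fun j => Creal_Re _).
set w := z * x ^+ j0.
have wn : w ^+ n = -1 by rewrite /w exprMn zn -exprM mulnC exprM xn expr1n mulr1.
have nw : `|w| = 1 := norm_one n0 (or_intror wn).
have cx : x^* * x = 1 by rewrite mulrC -normCK nx expr1n.
have h1 : 'Re (w * x) <= 'Re w.
  have -> : w * x = z * x ^+ ((j0.+1) %% d)%N.
    by rewrite (expr_mod _ xd) exprSr /w -mulrA.
  by have := hj0 ((j0.+1) %% d)%N; rewrite ltn_mod d0 => /(_ isT).
have h2 : 'Re (w * x^*) <= 'Re w.
  have -> : w * x^* = z * x ^+ ((j0 + d.-1) %% d)%N.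
    rewrite (expr_mod _ xd) exprD /w -mulrA; congr (_ * (_ * _)).
    apply: (mulIf (x := x)); first by rewrite -normr_eq0 nx oner_eq0.
    by rewrite cx -exprSr prednK.
  by have := hj0 ((j0 + d.-1) %% d)%N; rewrite ltn_mod d0 => /(_ isT).
set a := 'Re w; set b := 'Im w; set c := 'Re r; set s := 'Im r.
have Rex : 'Re x = c ^+ 2 - s ^+ 2 by rewrite /x expr2 ReM -!expr2.
have Imx : 'Im x = 2 * c * s by rewrite /x expr2 ImM; rewrite /c /s; ring.
rewrite ReM Rex Imx -/a -/b in h1.
rewrite ReM Re_conj Im_conj Rex Imx -/a -/b mulrN opprK in h2.
have hab := ReIm1 nw. have hcs := ReIm1 nr.
have c1 : c < 1.
  rewrite lt_neqAle; apply/andP; split.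
    apply/eqP => c1. have s0 : s = 0.
      apply/eqP; rewrite -sqrf_eq0; apply/eqP. rewrite -/c -/s c1 expr1n in hcs.
      by apply: (@addrI _ 1); rewrite addr0.
    have : r = 1 by rewrite [r]Crect -/c -/s c1 s0 mulr0 addr0.
    move=> r1; move: rn; rewrite r1 expr1n => /eqP; rewrite -subr_eq0 opprK (_ : 1 + 1 = 2%:R) // pnatr_eq0 //.
  by rewrite -nr; exact: (leif_Re_Creal r).1.
have ac : a <= c.
  have n1 : (1 < n)%N by lia.
  have [hb|hb] := real_ge0P (Creal_Im w).
    by apply: rootC_Re_max => //.
  rewrite /a -Re_conj; apply: rootC_Re_max => //.
    by rewrite -rmorphXn wn rmorphN rmorph1.
  by rewrite Im_conj oppr_ge0 ltW.
have [ea eb] := key_C _ _ _ _ (Creal_Re w) (Creal_Im w) (Creal_Re r) (Creal_Im r) hab hcs c1 h1 h2 ac.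
have x2d : x ^+ (2 * d) = 1 by rewrite mulnC exprM xd expr1n.
have zd : z ^+ (2 * d) = 1.
  move: eb; move/eqP; rewrite eqf_sqr => /orP[/eqP eb|/eqP eb].
    have wr : w = r by apply/eqCP; split.
    have := congr1 (fun y => y ^+ (2 * d)) wr => /=.
    rewrite /w exprMn exprAC x2d expr1n mulr1 => ->.
    by rewrite exprM.
  have wr : w = r^* by apply/eqCP; rewrite Re_conj Im_conj.
  have : w * r = 1 by rewrite wr mulrC -normCK nr expr1n.
  move=> /(congr1 (fun y => y ^+ (2 * d))) /=.
  rewrite /w exprMn (exprMn (2 * d) z (x ^+ j0)) exprAC x2d !expr1n mulr1 (exprM r 2 d) -/x xd mulr1.
  by [].
move: zd; move/eqP; rewrite -(prim_order_dvd pz) dvdn_pmul2l // => /(dvdn_leq d0).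
by rewrite leqNgt dltn.
Qed.

Lemma Sdvd_dvd (S : supernat) d n : (0 < n)%N -> (d %| n)%N -> Defs.sdvd n S -> Defs.sdvd d S.
Proof.
move=> n0 dn h p pp; have := h p pp; case: (S p) => // k hk.
exact: leq_trans (dvdn_leq_log _ n0 dn) hk.
Qed.

Lemma Sdvd_lcm (S : supernat) a b : (0 < a)%N -> (0 < b)%N -> Defs.sdvd a S -> Defs.sdvd b S -> Defs.sdvd (lcmn a b) S.
Proof.
move=> a0 b0 ha hb p pp; have := ha p pp; have := hb p pp.
case: (S p) => // k h1 h2; rewrite logn_lcm // geq_max; by apply/andP.
Qed.

Lemma pow_dvd {z : algC} {n m} : (n %| m)%N -> z ^+ n = 1 -> z ^+ m = 1.
Proof. by case/dvdnP => k ->; rewrite mulnC exprM => ->; rewrite expr1n. Qed.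

Lemma inZS_mul {S : supernat} {z1 z2} : inZS S z1 -> inZS S z2 -> inZS S (z1 * z2).
Proof.
move=> [a [a0 [ha za]]] [b [b0 [hb zb]]].
exists (lcmn a b); split; first by rewrite lcmn_gt0 a0.
split; first exact: Sdvd_lcm.
by rewrite exprMn (pow_dvd (dvdn_lcml a b) za) (pow_dvd (dvdn_lcmr a b) zb) mulr1.
Qed.

Lemma inZS_1 (S : supernat) : inZS S 1.
Proof.
exists 1%N; split => //; split; last by rewrite expr1.
by move=> p pp; case: (S p) => // k; rewrite logn1.
Qed.

Lemma inZS_pow {S : supernat} {z} k : inZS S z -> inZS S (z ^+ k).
Proof. by move=> [a [a0 [ha za]]]; exists a; split => //; split => //; rewrite exprAC za expr1n. Qed.

Lemma expi_pow n j : expi n j = expi n 1 ^+ j.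
Proof. by rewrite /expi expr1. Qed.

Lemma expi_n n : (0 < n)%N -> expi n 1 ^+ n = 1.
Proof. move=> n0; have := prim_expr_order (prim_expi n n0). done. Qed.

Lemma lam1 {R : realType} {S : supernat} {lam : algC -> R} : na_length S lam -> lam 1 = 1.
Proof. by case=> _ h _ _; apply/(h 1 (inZS_1 S)). Qed.

Lemma lam_pow {R : realType} {S : supernat} {lam : algC -> R} z k : na_length S lam -> inZS S z ->
  lam (z ^+ k) <= lam z.
Proof.
move=> hl hz; have [h1 _ h3 _] := hl.
elim: k => [|k IH]; first by rewrite expr0 (lam1 hl) h1.
rewrite exprS; apply: le_trans (h3 _ _ hz (inZS_pow k hz)) _.
by rewrite ge_max lexx IH.
Qed.

Lemma lam_mul_le {R : realType} {S : supernat} {lam : algC -> R} z1 z2 r : na_length S lam ->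
  inZS S z1 -> inZS S z2 -> lam z1 <= r -> lam z2 <= r -> lam (z1 * z2) <= r.
Proof.
move=> [_ _ h3 _] hz1 hz2 l1 l2; apply: le_trans (h3 _ _ hz1 hz2) _.
by rewrite ge_max l1 l2.
Qed.

Definition Hr {R : realType} (S : supernat) (lam : algC -> R) (r : R) (z : algC) :=
  inZS S z /\ lam z <= r.

Lemma Hr_pow {R : realType} {S : supernat} {lam : algC -> R} r z k : na_length S lam ->
  Hr S lam r z -> Hr S lam r (z ^+ k).
Proof.
move=> hl [zS lz]; split; first exact: inZS_pow.
exact: le_trans (lam_pow _ k hl zS) lz.
Qed.

Lemma Hr_mul {R : realType} {S : supernat} {lam : algC -> R} r z1 z2 : na_length S lam ->
  Hr S lam r z1 -> Hr S lam r z2 -> Hr S lam r (z1 * z2).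
Proof.
move=> hl [z1S l1] [z2S l2]; split; first exact: inZS_mul.
exact: (lam_mul_le _ _ _ hl z1S z2S l1 l2).
Qed.

Lemma musub_prim {R : realType} {S : supernat} {lam : algC -> R} r z d : na_length S lam ->
  Hr S lam r z -> d.-primitive_root z -> forall y, y ^+ d = 1 -> Hr S lam r y.
Proof.
move=> hl hz pz y yd; have [i ->] := prim_rootP pz yd.
exact: Hr_pow.
Qed.

Lemma musub_comb {R : realType} {S : supernat} {lam : algC -> R} r a b : na_length S lam ->
  (0 < a)%N -> (0 < b)%N ->
  (forall y, y ^+ a = 1 -> Hr S lam r y) -> (forall y, y ^+ b = 1 -> Hr S lam r y) ->
  forall w, w ^+ (a * (b %/ gcdn a b)) = 1 -> Hr S lam r w.
Proof.
move=> hl a0 b0 ha hb w.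
set g := gcdn a b.
have g0 : (0 < g)%N by rewrite gcdn_gt0 a0.
have ga : (g %| a)%N := dvdn_gcdl a b.
have gb : (g %| b)%N := dvdn_gcdr a b.
set a' := (a %/ g)%N; set b' := (b %/ g)%N.
have ea : (a' * g = a)%N := divnK ga.
have eb : (b' * g = b)%N := divnK gb.
have b'0 : (0 < b')%N by rewrite divn_gt0 // dvdn_leq.
have cop : gcdn b' a' = 1%N.
  have := muln_gcdl b' a' g; rewrite ea eb (gcdnC b a) -/g => e.
  have : (gcdn b' a' * g = 1 * g)%N by rewrite e mul1n.
  by move/eqP; rewrite eqn_pmul2r // => /eqP.
have eL : (a * b' = a' * b)%N by rewrite -ea -eb; lia.
move=> wL.
case: (egcdnP a' b'0) => km kn hk _.
rewrite cop in hk.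
have hu : Hr S lam r (w ^+ b') by apply: ha; rewrite -exprM mulnC.
have hv : Hr S lam r (w ^+ a') by apply: hb; rewrite -exprM -eL.
have -> : w = (w ^+ b') ^+ km * (w ^+ a') ^+ (kn * b.-1).
  rewrite -!exprM -exprD.
  have -> : (b' * km + a' * (kn * b.-1) = (a' * b) * kn + 1)%N.
    have := prednK b0; move: (b.-1) => B1 hB; rewrite -hB; nia.
  by rewrite exprD exprM -eL wL expr1n mul1r expr1.
by apply: Hr_mul => //; apply: Hr_pow.
Qed.

Lemma core {R : realType} {S : supernat} {lam : algC -> R} r : na_length S lam -> 1 <= r ->
  exists n, [/\ (0 < n)%N, Defs.sdvd n S & forall z, Hr S lam r z <-> z ^+ n = 1].
Proof.
move=> hl r1; have [h1 _ _ h4] := hl.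
have [F hF] := h4 r r1.
have H1 : Hr S lam r 1 by split; [exact: inZS_1|rewrite (lam1 hl)].
have key : forall L : seq algC, exists n, [/\ (0 < n)%N,
    (forall y, y ^+ n = 1 -> Hr S lam r y) &
    (forall z, z \in L -> Hr S lam r z -> z ^+ n = 1)].
  elim => [|z L [n [n0 hmu hL]]].
    exists 1%N; split => // y; rewrite expr1 => ->; exact: H1.
  case: (classic (Hr S lam r z)) => hz; last first.
    exists n; split => // y; rewrite inE => /orP[/eqP->|yL] hy //; last exact: hL.
  have [[m [m0 [_ zm]]] _] := hz.
  have [d pd _] := prim_order_exists m0 zm.
  have d0 := prim_order_gt0 pd.
  have hd := musub_prim _ _ _ hl hz pd.
  exists (n * (d %/ gcdn n d))%N; split.
  - by rewrite muln_gt0 n0 divn_gt0 ?gcdn_gt0 ?n0 // dvdn_leq // dvdn_gcdr.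
  - exact: musub_comb _ _ _ hl n0 d0 hmu hd.
  - have dn' : (d %| n * (d %/ gcdn n d))%N by rewrite muln_divCA_gcd dvdn_mulr.
    have nn' : (n %| n * (d %/ gcdn n d))%N by rewrite dvdn_mulr.
    move=> y; rewrite inE => /orP[/eqP->|yL] hy.
      by apply: pow_dvd dn' _; apply: prim_expr_order.
    by apply: pow_dvd nn' _; apply: hL.
have [n [n0 hmu hL]] := key F.
exists n; split => //.
  have [[m [m0 [hm zm]]] _] := hmu _ (expi_n n n0).
  apply: (Sdvd_dvd _ _ _ m0 _ hm).
  by rewrite (prim_order_dvd (prim_expi n n0)); apply/eqP.
move=> z; split; last exact: hmu.
by move=> hz; apply: hL => //; apply: hF; case: hz.
Qed.

Lemma sdvd_mulp (S : supernat) D p : prime p -> (0 < D)%N -> Defs.sdvd D S ->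
  (match S p with Some k => is_true (logn p D < k)%N | None => True end) -> Defs.sdvd (D * p) S.
Proof.
move=> pp D0 hD hp q qq; have := hD q qq.
case: (eqVneq q p) => [->|ne].
  case: (S p) hp => // k hk _; rewrite (lognM _ D0 (prime_gt0 pp)) (logn_prime p pp) eqxx.
  by rewrite addn1.
case: (S q) => // k; rewrite (lognM _ D0 (prime_gt0 pp)) (logn_prime q pp).
by rewrite (negbTE ne) addn0.
Qed.

Lemma big_sdvd (S : supernat) : snat_infinite S -> forall n, exists d, (n < d)%N /\ Defs.sdvd d S.
Proof.
move=> hinf n; case: (classic (exists d, (n < d)%N /\ Defs.sdvd d S)) => // hno.
exfalso; apply: hinf.
have hb : forall d, Defs.sdvd d S -> (d <= n)%N.
  move=> d hd; rewrite leqNgt; apply/negP => lt; apply: hno; by exists d.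
pose P := fun d => (0 < d)%N && `[< Defs.sdvd d S >].
have exP : exists i, P i.
  exists 1%N; rewrite /P /=; apply/asboolP => p pp; case: (S p) => // k; by rewrite logn1.
have ubP : forall i, P i -> (i <= n)%N by move=> i /andP[_ /asboolP]; exact: hb.
case: (ex_maxnP exP ubP) => D /andP[D0 /asboolP hD] maxD.
have nomul : forall p, prime p -> ~ Defs.sdvd (D * p) S.
  move=> p pp h; have := maxD (D * p)%N.
  rewrite /P muln_gt0 D0 prime_gt0 //= => /(_ (introT (asboolP _) h)).
  have := prime_gt1 pp; nia.
exists D; split => // p pp.
have := hD p pp.
case E : (S p) => [k|] hk.
  case: (ltngtP (logn p D) k) => [lt|gt|->//].
    by exfalso; apply: (nomul p pp); apply: sdvd_mulp => //; rewrite E.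
  by move: hk; rewrite leqNgt gt.
by exfalso; apply: (nomul p pp); apply: sdvd_mulp => //; rewrite E.
Qed.

Lemma unbounded {R : realType} {S : supernat} {lam : algC -> R} :
  snat_infinite S -> na_length S lam -> forall r, exists z, inZS S z /\ r < lam z.
Proof.
move=> hinf hl r; case: (classic (exists z, inZS S z /\ r < lam z)) => // hno.
exfalso.
have hb : forall z, inZS S z -> lam z <= Num.max r 1.
  move=> z zS; rewrite le_max; apply/orP; left; rewrite leNgt; apply/negP => h.
  by apply: hno; exists z.
have r1 : 1 <= Num.max r 1 by rewrite le_max lexx orbT.
have [n [n0 _ hn]] := core (Num.max r 1) hl r1.
have [d [nd hd]] := big_sdvd S hinf n.
have d0 : (0 < d)%N by apply: leq_ltn_trans nd.
have zS : inZS S (expi d 1) by exists d; split => //; split => //; exact: expi_n.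
have : (expi d 1) ^+ n = 1 by apply/hn; split => //; exact: hb.
move/eqP; rewrite -(prim_order_dvd (prim_expi d d0)) => /(dvdn_leq n0).
by rewrite leqNgt nd.
Qed.

Lemma min_list {R : realType} (L : seq R) (Q : R -> Prop) : (exists u, u \in L /\ Q u) ->
  exists v, [/\ v \in L, Q v & forall u, u \in L -> Q u -> v <= u].
Proof.
elim: L => [[u []]//|x L IH] [u [uL Qu]].
case: (classic (exists u, u \in L /\ Q u)) => [ex|nex].
  have [v [vL Qv hv]] := IH ex.
  case: (classic (Q x)) => Qx.
    case: (leP x v) => xv.
      exists x; split => //; first by rewrite inE eqxx.
      move=> y; rewrite inE => /orP[/eqP->//|yL] Qy; exact: le_trans xv (hv y yL Qy).
    exists v; split => //; first by rewrite inE vL orbT.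
    move=> y; rewrite inE => /orP[/eqP->|yL] Qy; [exact: ltW|exact: hv].
  exists v; split => //; first by rewrite inE vL orbT.
  move=> y; rewrite inE => /orP[/eqP->|yL] Qy //; exact: hv.
have Qx : Q x.
  move: uL; rewrite inE => /orP[/eqP<-//|uL]; by exfalso; apply: nex; exists u.
exists x; split => //; first by rewrite inE eqxx.
move=> y; rewrite inE => /orP[/eqP->//|yL] Qy; by exfalso; apply: nex; exists y.
Qed.

Definition isval {R : realType} (S : supernat) (lam : algC -> R) (v : R) :=
  exists z, inZS S z /\ lam z = v.

Lemma next_ex {R : realType} {S : supernat} {lam : algC -> R} :
  snat_infinite S -> na_length S lam -> forall r,
  exists v, [/\ isval S lam v, r < v & forall u, isval S lam u -> r < u -> v <= u].
Proof.
move=> hinf hl r; have [h1 _ _ h4] := hl.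
have [z0 [z0S lz0]] := unbounded hinf hl r.
have [F hF] := h4 (lam z0) (h1 _ z0S).
pose Q u := isval S lam u /\ r < u.
have [v [vL [Pv rv] hv]] : exists v, [/\ v \in map lam F, Q v & forall u, u \in map lam F -> Q u -> v <= u].
  apply: min_list; exists (lam z0); split; last by split => //; exists z0.
  by apply: map_f; apply: hF.
have vz0 : v <= lam z0 by apply: hv; [apply: map_f; apply: hF|split => //; exists z0].
exists v; split => // u [z [zS <-]] ru.
case: (leP (lam z) (lam z0)) => h.
  by apply: hv; [apply: map_f; apply: hF|split => //; exists z].
exact: le_trans vz0 (ltW h).
Qed.

Lemma sdvd_ppow (S : supernat) p k : prime p ->
  (match S p with Some k' => is_true (k <= k')%N | None => True end) -> Defs.sdvd (p ^ k) S.
Proof.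
move=> pp hp q qq; rewrite lognX (logn_prime q pp).
case: (eqVneq q p) => [->|ne]; first by case: (S p) hp => // k' hk; rewrite muln1.
by case: (S q) => // k'; rewrite muln0.
Qed.

Theorem mainTheorem4 (R : realType) (S : supernat) (lam : algC -> R) :
  snat_infinite S -> na_length S lam ->
  exists (s : nat -> nat) (l : nat -> R),
    [/\ is_scale S s,
        (forall m, (1 <= m)%N -> 1 < l m),
        (forall m, (1 <= m)%N -> l m < l m.+1),
        (forall M : R, exists N : nat, forall m, (N <= m)%N -> M < l m) &
        eq_lambda_sl lam s l].
Proof.
move=> hinf hl; have [h1 h2 h3 h4] := hl.
pose nx r := proj1_sig (constructive_indefinite_description _ (next_ex hinf hl r)).
have nxP : forall r, [/\ isval S lam (nx r), r < nx r &
    forall u, isval S lam u -> r < u -> nx r <= u].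
  move=> r; exact: (proj2_sig (constructive_indefinite_description _ (next_ex hinf hl r))).
pose l m := iter m nx 1.
have lS : forall m, l m.+1 = nx (l m) by [].
have linc : forall m, l m < l m.+1 by move=> m; rewrite lS; case: (nxP (l m)).
have lval : forall m, isval S lam (l m.+1) by move=> m; rewrite lS; case: (nxP (l m)).
have lge1 : forall m, 1 <= l m.
  by elim => [|m IH] //; apply: le_trans IH (ltW (linc m)).
have lmono : forall m k, (m < k)%N -> l m < l k.
  move=> m; elim => [//|k IH]; rewrite ltnS leq_eqVlt => /orP[/eqP->|/IH h].
    exact: linc.
  exact: lt_trans h (linc k).
have lle : forall m k, (m <= k)%N -> l m <= l k.
  move=> m k; rewrite leq_eqVlt => /orP[/eqP->//|/lmono/ltW//].
have ldiv : forall M : R, exists N : nat, forall m, (N <= m)%N -> M < l m.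
  move=> M; suff [N hN] : exists N, M < l N.
    by exists N => m hm; apply: lt_le_trans hN (lle _ _ hm).
  case: (classic (exists N, M < l N)) => // hno; exfalso.
  have hb : forall N, l N <= Num.max M 1.
    move=> N; rewrite le_max; apply/orP; left; rewrite leNgt; apply/negP => h.
    by apply: hno; exists N.
  have M1 : 1 <= Num.max M 1 by rewrite le_max lexx orbT.
  have [F hF] := h4 (Num.max M 1) M1.
  have sub : {subset [seq l i.+1 | i <- iota 0 (size F).+1] <= map lam F}.
    move=> u /mapP [i _ ->]; have [z [zS lz]] := lval i.
    by rewrite -lz; apply: map_f; apply: hF => //; rewrite lz.
  have un : uniq [seq l i.+1 | i <- iota 0 (size F).+1].
    rewrite map_inj_uniq ?iota_uniq // => i j eij.
    case: (ltngtP i j) => // hij.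
      by have := lmono i.+1 j.+1 hij; rewrite eij ltxx.
    by have := lmono j.+1 i.+1 hij; rewrite eij ltxx.
  have := uniq_leq_size un sub; rewrite !size_map size_iota; lia.
have sspec : forall m, exists n, [/\ (0 < n)%N, Defs.sdvd n S &
    forall z, Hr S lam (l m) z <-> z ^+ n = 1].
  by move=> m; apply: core.
pose s m := proj1_sig (constructive_indefinite_description _ (sspec m)).
have hs : forall m, [/\ (0 < s m)%N, Defs.sdvd (s m) S &
    forall z, Hr S lam (l m) z <-> z ^+ (s m) = 1].
  move=> m; exact: (proj2_sig (constructive_indefinite_description _ (sspec m))).
have s0 : forall m, (0 < s m)%N by move=> m; case: (hs m).
have zs : forall m, expi (s m) 1 ^+ (s m) = 1 by move=> m; exact: expi_n.
have ps : forall m, (s m).-primitive_root (expi (s m) 1) by move=> m; exact: prim_expi.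
have hs0 : s 0%N = 1%N.
  have [_ _ e] := hs 0%N.
  have [zS lz] := (e _).2 (zs 0%N).
  have e1 : lam (expi (s 0%N) 1) = 1 by apply: le_anti; rewrite lz h1.
  have : expi (s 0%N) 1 = 1 by apply/(h2 _ zS).
  move=> h; have : (s 0%N %| 1)%N by rewrite (prim_order_dvd (ps 0%N)) expr1 h.
  by rewrite dvdn1 => /eqP.
have hdiv : forall m, (s m %| s m.+1)%N.
  move=> m; have [_ _ e] := hs m; have [_ _ e'] := hs m.+1.
  have [zS lz] := (e _).2 (zs m).
  have : expi (s m) 1 ^+ s m.+1 = 1.
    by apply/e'; split => //; apply: le_trans lz (ltW (linc m)).
  by move/eqP; rewrite -(prim_order_dvd (ps m)).
have hlt : forall m, (s m < s m.+1)%N.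
  move=> m; rewrite ltn_neqAle dvdn_leq // andbT; apply/eqP => e.
  have [z [zS lz]] := lval m.
  have [_ _ e1] := hs m; have [_ _ e2] := hs m.+1.
  have : z ^+ s m.+1 = 1 by apply/e2; split => //; rewrite lz.
  rewrite -e => /e1 [_]; rewrite lz => h.
  by have := linc m; rewrite ltNge h.
have gen : forall p k, prime p -> Defs.sdvd (p ^ k) S ->
    exists m, (1 <= m)%N /\ (k <= logn p (s m))%N.
  move=> p k pp hk; set q := (p ^ k)%N.
  have q0 : (0 < q)%N by rewrite expn_gt0 prime_gt0.
  have zS : inZS S (expi q 1) by exists q; split => //; split => //; exact: expi_n.
  have [N hN] := ldiv (lam (expi q 1)).
  exists (maxn N 1); split; first by rewrite leq_max leqnn orbT.
  have [_ _ e] := hs (maxn N 1).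
  have : expi q 1 ^+ s (maxn N 1) = 1.
    by apply/e; split => //; apply: ltW; apply: hN; rewrite leq_max leqnn.
  move/eqP; rewrite -(prim_order_dvd (prim_expi q q0)).
  by rewrite pfactor_dvdn.
exists s, l; split.
- split => // p pp.
  case E : (S p) => [k|].
    split.
      by move=> m _; have [_ hsd _] := hs m; have := hsd p pp; rewrite E.
    have [m [m1 hk]] := gen p k pp (sdvd_ppow S p k pp ltac:(by rewrite E)).
    exists m; split => //; apply/eqP; rewrite eqn_leq hk andbT.
    by have [_ hsd _] := hs m; have := hsd p pp; rewrite E.
  move=> k; have [m [m1 hk]] := gen p k.+1 pp (sdvd_ppow S p k.+1 pp ltac:(by rewrite E)).
  by exists m; split.
- by move=> [//|m] _; apply: le_lt_trans (lge1 m) (linc m).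
- by move=> m _; exact: linc.
- exact: ldiv.
split; first exact: lam1 hl.
move=> [//|k] j _ j0 js hnd.
have esc : sc s k.+1.-1 = s k by rewrite /sc /=; case: eqP => [->|//]; rewrite hs0.
rewrite esc in hnd.
set z := expi (s k.+1) j.
have ez : z = expi (s k.+1) 1 ^+ j by exact: expi_pow.
have [_ _ e] := hs k.+1; have [_ _ ek] := hs k.
have zsz : z ^+ s k.+1 = 1 by rewrite ez exprAC zs expr1n.
have [zS lz] := (e z).2 zsz.
apply: le_anti; rewrite lz /=.
rewrite leNgt; apply/negP => hlt'.
have hzk : lam z <= l k.
  rewrite leNgt; apply/negP => hk.
  have [_ _ mn] := nxP (l k).
  have := mn (lam z) (ex_intro _ z (conj zS erefl)) hk.
  by rewrite -lS leNgt hlt'.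
have := (ek z).1 (conj zS hzk).
rewrite ez -exprM => /eqP; rewrite -(prim_order_dvd (ps k.+1)).
rewrite -(divnK (hdiv k)) (dvdn_pmul2r (s0 k)).
by move=> h; rewrite h in hnd.
Qed.
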